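(* Let $n\ge2$ and let $A=T_n\langle S;T\rangle$ be a Boolean Toeplitz matrix with $S=\{s_1<\dots<s_{k_1}\}$, $T=\{t_1<\dots<t_{k_2}\}$ nonempty subsets of $\{1,\dots,n-1\}$, $\max S+\min T\le n$ and $\min S+\max T\le n$. Let $d=\gcd\{s+t: s\in S, t\in T\}$ and $d'=\gcd(d,s_1)$. Then (a) the matrix period of $A$ is $d/d'$; (b) the competition period of $A$ is $1$; (c) there is a permutation matrix $P$ such that, as $m\to\infty$, $P\,(A^m(A^T)^m)\,P^T$ converges to (i.e. is eventually equal to) the block diagonal matrix $\mathrm{diag}(J_{m_1},\dots,J_{m_d})$, where $J_{m_i}$ is the all-ones matrix of order $m_i=|\{v\in[n] : v\equiv i\pmod d\}|$.
   Context: Boolean arithmetic on $\{0,1\}$: $1+1=1$. $T_n\langle S;T\rangle$ is the $n\times n$ $(0,1)$-matrix whose $(i,j)$-entry is $1$ iff $j-i\in S$ or $i-j\in T$. The matrix period of $A$ is the smallest $p\ge1$ with $A^m=A^{m+p}$ for all sufficiently large $m$. The competition index $q$ of $A$ is the smallest positive integer such that $A^{q+i}(A^T)^{q+i}=A^{q+r+i}(A^T)^{q+r+i}$ for some $r\ge1$ and all $i\ge0$; the competition period is the smallest $p\ge1$ with $A^q(A^T)^q=A^{q+p}(A^T)^{q+p}$. *)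

(* Defs.v *)
From mathcomp Require Import all_boot all_order all_algebra all_fingroup.
Set Implicit Arguments. Unset Strict Implicit. Unset Printing Implicit Defensive.

(* Boolean (0,1)-matrices as 'M[bool]_n, with Boolean arithmetic 1+1=1. *)
Definition bmul n (A B : 'M[bool]_n) : 'M[bool]_n :=
  \matrix_(i, j) [exists k, A i k && B k j].

Definition bid n : 'M[bool]_n := \matrix_(i, j) (i == j).

Definition bpow n (A : 'M[bool]_n) (m : nat) : 'M[bool]_n := iter m (bmul A) (bid n).

(* T_n<S;T>: (i,j) entry is 1 iff j - i \in S or i - j \in T.
   Indices are 0-based ordinals; S, T are sets of elements of {0..n-1}. *)
Definition toeplitz n (S T : {set 'I_n}) : 'M[bool]_n :=
  \matrix_(i, j) ([exists s in S, (i + s == j)%N] || [exists t in T, (j + t == i)%N]).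

Definition eventually_periodic n (A : 'M[bool]_n) (p : nat) : Prop :=
  exists M, forall m, M <= m -> bpow A m = bpow A (m + p).

Definition is_matrix_period n (A : 'M[bool]_n) (p : nat) : Prop :=
  0 < p /\ eventually_periodic A p /\
  forall p', 0 < p' -> eventually_periodic A p' -> p <= p'.

Definition compm n (A : 'M[bool]_n) (m : nat) : 'M[bool]_n :=
  bmul (bpow A m) (bpow A^T m).

Definition comp_index_prop n (A : 'M[bool]_n) (q : nat) : Prop :=
  exists2 r, 0 < r & forall i, compm A (q + i) = compm A (q + r + i).

Definition is_competition_index n (A : 'M[bool]_n) (q : nat) : Prop :=
  0 < q /\ comp_index_prop A q /\
  forall q', 0 < q' -> comp_index_prop A q' -> q <= q'.

Definition is_competition_period n (A : 'M[bool]_n) (p : nat) : Prop :=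
  exists q, is_competition_index A q /\
    [/\ 0 < p, compm A q = compm A (q + p) &
        forall p', 0 < p' -> compm A q = compm A (q + p') -> p <= p'].

(* Block diagonal (0,1)-matrix diag(J_{ms_1}, ..., J_{ms_k}) of order n
   (blocks occupy consecutive index ranges). *)
Definition blockdiag_ones n (ms : seq nat) : 'M[bool]_n :=
  \matrix_(i, j) has (fun k => let a := sumn (take k ms) in
                               let b := a + nth 0 ms k in
                               (a <= i < b) && (a <= j < b)) (iota 0 (size ms)).

Definition bperm_mx n (s : 'S_n) : 'M[bool]_n := \matrix_(i, j) (s i == j).

Definition class_sizes (n d : nat) : seq nat :=
  [seq count (fun v => v %% d == i %% d) (iota 1 n) | i <- iota 1 d].

(* Main.v *)
Require Import Defs.
From mathcomp Require Import all_boot all_order all_algebra all_fingroup.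
From mathcomp Require Import zify.
Set Implicit Arguments. Unset Strict Implicit. Unset Printing Implicit Defensive.

Lemma bpow0E N (A : 'M[bool]_N) i j : bpow A 0 i j = (i == j).
Proof. by rewrite /bpow /= /bid mxE. Qed.

Lemma bpowSE N (A : 'M[bool]_N) m i j :
  bpow A m.+1 i j = [exists k, A i k && bpow A m k j].
Proof. by rewrite /bpow iterS /bmul mxE. Qed.

Lemma bpow_cat N (A : 'M[bool]_N) m1 m2 i j k :
  bpow A m1 i j -> bpow A m2 j k -> bpow A (m1 + m2) i k.
Proof.
elim: m1 i => [|m1 IH] i; first by rewrite bpow0E => /eqP ->.
rewrite bpowSE => /existsP [l /andP [Hil Hl]] Hjk.
rewrite addSn bpowSE; apply/existsP; exists l; rewrite Hil /=.
exact: IH.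
Qed.

Definition W n (S T : {set 'I_n.+1}) m (x y : nat) :=
  bpow (toeplitz S T) m (inord x) (inord y).

Lemma edgeS n (S T : {set 'I_n.+1}) (s : 'I_n.+1) x :
  s \in S -> x + s <= n -> toeplitz S T (inord x) (inord (x + s)).
Proof.
move=> Hs Hx; rewrite mxE; apply/orP; left; apply/existsP; exists s.
rewrite Hs /= !inordK //; lia.
Qed.

Lemma edgeT n (S T : {set 'I_n.+1}) (t : 'I_n.+1) x :
  t \in T -> t <= x -> x <= n -> toeplitz S T (inord x) (inord (x - t)).
Proof.
move=> Ht Htx Hx; rewrite mxE; apply/orP; right; apply/existsP; exists t.
rewrite Ht /= !inordK //; lia.
Qed.

Lemma W0 n (S T : {set 'I_n.+1}) x : W S T 0 x x.
Proof. by rewrite /W bpow0E. Qed.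

Lemma W_cat n (S T : {set 'I_n.+1}) m1 m2 x y z :
  W S T m1 x y -> W S T m2 y z -> W S T (m1 + m2) x z.
Proof. exact: bpow_cat. Qed.

Lemma W_S n (S T : {set 'I_n.+1}) (s : 'I_n.+1) m x z :
  s \in S -> x + s <= n -> W S T m (x + s) z -> W S T m.+1 x z.
Proof.
move=> Hs Hx Hw; rewrite /W bpowSE; apply/existsP; exists (inord (x + s)).
by rewrite edgeS.
Qed.

Lemma W_T n (S T : {set 'I_n.+1}) (t : 'I_n.+1) m x z :
  t \in T -> t <= x -> x <= n -> W S T m (x - t) z -> W S T m.+1 x z.
Proof.
move=> Ht Htx Hx Hw; rewrite /W bpowSE; apply/existsP; exists (inord (x - t)).
by rewrite edgeT.
Qed.

Lemma walk_ab n (S T : {set 'I_n.+1}) (a b : 'I_n.+1) :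
  a \in S -> b \in T -> a + b <= n.+1 ->
  forall p q x y, x <= n -> y <= n -> x + p * a = y + q * b -> W S T (p + q) x y.
Proof.
move=> Ha Hb Hab p q; elim: {p q}(p + q) {-2}p {-2}q (erefl (p + q)) => [|k IH] p q Hk x y Hx Hy He.
  have Hp0 : p = 0 by lia.
  have Hq0 : q = 0 by lia.
  subst p q; rewrite !mul0n !addn0 in He; subst y.
  exact: W0.
case: (boolP ((b <= x) && (0 < q))) => [/andP [Hbx Hq]|Hn].
  have -> : p + q = (p + q.-1).+1 by lia.
  apply: (W_T (t:=b)) => //; apply: IH => //; [lia | lia |].
  have : q = q.-1.+1 by lia.
  move=> Eq; rewrite Eq mulSn in He; lia.
move: Hn; rewrite negb_and -ltnNge -eqn0Ngt => Hn.
case: p Hk He => [|p] Hk He.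
  case: q Hk He Hn => [|q] Hk He Hn //.
  rewrite mulSn in He; exfalso; move: Hn => /orP [Hxb|//]; lia.
have Hxa : x + a <= n.
  move: Hn => /orP [Hxb|/eqP Hq0]; first lia.
  move: He; rewrite Hq0 mul0n addn0 mulSn; lia.
rewrite addSn; apply: (W_S (s:=a)) => //.
apply: IH => //; [lia | rewrite mulSn in He; lia].
Qed.
Local Close Scope ring_scope.
Import GRing.Theory Num.Theory.
Local Open Scope ring_scope.

Lemma dvdz_natE (d m : nat) : (d%:Z %| m%:Z)%Z = (d %| m)%N.
Proof. by rewrite dvdzE. Qed.

Definition dd n (S T : {set 'I_n}) :=
  \big[gcdn/0%N]_(s in S) \big[gcdn/0%N]_(t in T) (val s + val t)%N.

Lemma dd_dvd n (S T : {set 'I_n}) s t : s \in S -> t \in T -> (dd S T %| s + t)%N.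
Proof.
move=> Hs Ht; rewrite /dd (bigD1 s) //= (bigD1 t) //=.
apply: (dvdn_trans (dvdn_gcdl _ _)); exact: dvdn_gcdl.
Qed.

Lemma dd_sym n (S T : {set 'I_n}) : dd S T = dd T S.
Proof.
rewrite /dd exchange_big /=; apply: eq_bigr => t _; apply: eq_bigr => s _.
by rewrite addnC.
Qed.

Lemma necess n (S T : {set 'I_n}) (a b : 'I_n) m i j :
  a \in S -> b \in T ->
  bpow (toeplitz S T) m i j -> ((dd S T)%:Z %| j%:Z - i%:Z - (m * a)%:Z)%Z.
Proof.
move=> Ha Hb; elim: m i => [|m IH] i.
  by rewrite bpow0E => /eqP ->; rewrite mul0n subrr sub0r rpredN dvdz0.
rewrite bpowSE => /existsP [k /andP [Hik Hk]].
have H1 := IH _ Hk.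
have H2 : ((dd S T)%:Z %| k%:Z - i%:Z - a%:Z)%Z.
  move: Hik; rewrite mxE => /orP [/existsP [s /andP [Hs /eqP Es]]|/existsP [t /andP [Ht /eqP Et]]].
    have -> : k%:Z - i%:Z - a%:Z = (s + b)%N%:Z - (a + b)%N%:Z by lia.
    by apply: rpredB; rewrite dvdz_natE dd_dvd.
  have -> : k%:Z - i%:Z - a%:Z = - (a + t)%N%:Z by lia.
  by rewrite rpredN dvdz_natE dd_dvd.
have -> : j%:Z - i%:Z - (m.+1 * a)%N%:Z =
   (j%:Z - k%:Z - (m * a)%N%:Z) + (k%:Z - i%:Z - a%:Z) by rewrite mulSn; lia.
exact: rpredD.
Qed.
Local Close Scope ring_scope.
Import GRing.Theory Num.Theory.
Local Open Scope ring_scope.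

Definition Cf (X : Type) (c : X -> int) (L : seq X) : int :=
  foldr (fun g acc => c g + acc) 0 L.

Lemma Cf_cat X (c : X -> int) L1 L2 : Cf c (L1 ++ L2) = Cf c L1 + Cf c L2.
Proof. by elim: L1 => [|g L1 IH] /=; rewrite ?add0r // IH addrA. Qed.

Lemma Cf_nseq X (c : X -> int) e g : Cf c (nseq e g) = e%:Z * c g.
Proof.
elim: e => [|e IH] /=; first by rewrite mul0r.
by rewrite IH -addn1 PoszD mulrDl mul1r addrC.
Qed.

Definition hgl (X : Type) (c : X -> int) (N : nat) (gl : seq X) : int :=
  foldr (fun g acc => gcdz (c g) acc) N%:Z gl.

Lemma table (X : eqType) (c : X -> int) (N : nat) (gl : seq X) : (0 < N)%N ->
  forall r : int, (hgl c N gl %| r)%Z ->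
  exists L : seq X, [/\ {subset L <= gl}, (size L <= N * size gl)%N &
                       (N%:Z %| Cf c L - r)%Z].
Proof.
move=> HN; elim: gl => [|g gl IH] r /=.
  move=> Hr; exists [::]; split => //=; by rewrite sub0r rpredN.
move=> Hr.
have [u [v Huv]] := Bezoutz (c g) (hgl c N gl).
have [k Hk] := dvdzP Hr.
have [L0 [HL0s HL0z HL0d]] := IH (k * v * hgl c N gl) (dvdz_mull _ (dvdzz _)).
have HN0 : N%:Z != 0 by rewrite eqz_nat -lt0n.
have Hge := modz_ge0 (k * u) HN0.
have Hlt : ((k * u) %% N%:Z)%Z < N%:Z by apply: ltz_pmod; rewrite ltz_nat.
set e := `|((k * u) %% N%:Z)%Z|%N.
have He : e%:Z = ((k * u) %% N%:Z)%Z by rewrite /e gez0_abs.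
exists (nseq e g ++ L0); split.
- move=> x; rewrite mem_cat => /orP [/nseqP [-> _]|Hx]; first exact: mem_head.
  by rewrite in_cons HL0s ?orbT.
- rewrite size_cat size_nseq mulnS; apply: leq_add => //.
  have : e%:Z < N%:Z by rewrite He.
  by rewrite ltz_nat => /ltnW.
- rewrite Cf_cat Cf_nseq Hk.

  rewrite -Huv.
  have -> : e%:Z * c g + Cf c L0 - k * (u * c g + v * hgl c N gl) =
    (e%:Z - k * u) * c g + (Cf c L0 - k * v * hgl c N gl).
    by rewrite !mulrDr !mulrDl !mulrA; lia.
  apply: rpredD => //; apply: dvdz_mulr.
  rewrite He {2}(divz_eq (k * u) N%:Z).
  have -> : ((k * u) %% N%:Z)%Z - (((k * u) %/ N%:Z)%Z * N%:Z + ((k * u) %% N%:Z)%Z)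
     = - (((k * u) %/ N%:Z)%Z * N%:Z) by lia.
  by rewrite rpredN dvdz_mull.
Qed.
Local Close Scope ring_scope.
Import GRing.Theory Num.Theory.
Local Open Scope ring_scope.

Definition dlt n (g : bool * 'I_n) : int := if g.1 then (g.2 : nat)%:Z else - (g.2 : nat)%:Z.

Definition valid n (S T : {set 'I_n}) (g : bool * 'I_n) := if g.1 then g.2 \in S else g.2 \in T.

Lemma walk_prefix n (S T : {set 'I_n.+1}) (a b : 'I_n.+1) :
  a \in S -> b \in T -> (0 < a)%N -> (0 < b)%N ->
  (forall s, s \in S -> s + b <= n.+1)%N -> (forall t, t \in T -> a + t <= n.+1)%N ->
  forall L, all (valid S T) L -> forall x, (x <= n)%N ->
  exists al be y, [/\ (al <= n.+1 * size L)%N, (be <= n.+1 * size L)%N, (y <= n)%N,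
     W S T (size L + al + be) x y &
     y%:Z = x%:Z + (al * a)%N%:Z - (be * b)%N%:Z + Cf (@dlt _) L].
Proof.
move=> Ha Hb Ha0 Hb0 HS HT; elim => [|[[] g] L IH] /=.
  move=> _ x Hx; exists 0%N, 0%N, x; split => //; try exact: W0; by rewrite !mul0n subr0 !addr0.
- move=> /andP [Hg HL] x Hx; rewrite /valid /= in Hg.
  have Hxb : (x %% b < b)%N by rewrite ltn_pmod.
  have Hgn : (x %% b + g <= n)%N by have := HS _ Hg; lia.
  have [al [be [y [Hal Hbe Hy Hw He]]]] := IH HL _ Hgn.
  exists al, (x %/ b + be)%N, y; split => //.
  + by rewrite mulnS; lia.
  + rewrite mulnS; have := leq_div x b; lia.
  + have H1 : W S T (0 + x %/ b) x (x %% b).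
      apply: (walk_ab (a:=a) (b:=b)) => //; first by have := HS _ Ha; lia.
      + lia.
      + by rewrite mul0n addn0 addnC -divn_eq.
    have H2 : W S T (size L + al + be).+1 (x %% b) y by apply: (W_S (s:=g)).
    have := W_cat H1 H2; congr W; lia.
  + rewrite He /dlt /=.
    have Ex := divn_eq x b.
    rewrite mulnDl; lia.
- move=> /andP [Hg HL] x Hx; rewrite /valid /= in Hg.
  set k := ((n - x) %/ a)%N.
  have Hk1 : (k * a <= n - x)%N by apply: leq_divM.
  have Hk2 : (n - x < k.+1 * a)%N by apply: ltn_ceil.
  have Hz : (x + k * a <= n)%N by lia.
  have Hgz : (g <= x + k * a)%N by have := HT _ Hg; rewrite mulSn in Hk2; lia.
  have Hgn : (x + k * a - g <= n)%N by lia.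
  have [al [be [y [Hal Hbe Hy Hw He]]]] := IH HL _ Hgn.
  exists (k + al)%N, be, y; split => //.
  + rewrite mulnS; have : (k <= n)%N.
      apply: (leq_trans (leq_div _ _)); lia.
    lia.
  + by rewrite mulnS; lia.
  + have H1 : W S T (k + 0) x (x + k * a).
      apply: (walk_ab (a:=a) (b:=b)) => //; first by have := HS _ Ha; lia.
      by rewrite mul0n addn0.
    have H2 : W S T (size L + al + be).+1 (x + k * a) y by apply: (W_T (t:=g)).
    have := W_cat H1 H2; congr W; lia.
  + rewrite He /dlt /= mulnDl; lia.
Qed.
Local Close Scope ring_scope.
Import GRing.Theory Num.Theory.
Local Open Scope ring_scope.

Lemma hgl_dvd (X : eqType) (c : X -> int) N (gl : seq X) :
  (hgl c N gl %| N%:Z)%Z /\ forall g, g \in gl -> (hgl c N gl %| c g)%Z.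
Proof.
elim: gl => [|g gl [IH1 IH2]] /=; first by split => //; exact: dvdzz.
split; first exact: (dvdz_trans (dvdz_gcdr _ _)).
move=> g'; rewrite in_cons => /orP [/eqP ->|Hg]; first exact: dvdz_gcdl.
exact: (dvdz_trans (dvdz_gcdr _ _) (IH2 _ Hg)).
Qed.

Definition gens n (S T : {set 'I_n}) : seq (bool * 'I_n) :=
  [seq (true, s) | s <- enum S] ++ [seq (false, t) | t <- enum T].

Definition cc n (b : nat) (g : bool * 'I_n) : int := dlt g + b%:Z.

Lemma Cf_cc n b (L : seq (bool * 'I_n)) : Cf (cc b) L = Cf (@dlt _) L + (size L * b)%N%:Z.
Proof.
elim: L => [|g L IH] /=; first by rewrite mul0n addr0.
rewrite IH /cc mulSn PoszD; lia.
Qed.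

Lemma hgl_dd n (S T : {set 'I_n}) (b : nat) N :
  (hgl (cc b) N (gens S T) %| (dd S T)%:Z)%Z.
Proof.
set h := hgl _ _ _.
have Hst : forall s t, s \in S -> t \in T -> (`|h| %| s + t)%N.
  move=> s t Hs Ht.
  have [_ H] := hgl_dvd (cc b) N (gens S T).
  have H1 : (h %| cc b (true, s))%Z by apply: H; rewrite mem_cat map_f ?mem_enum.
  have H2 : (h %| cc b (false, t))%Z by apply: H; rewrite mem_cat orbC map_f ?mem_enum.
  have := rpredB H1 H2; rewrite /cc /dlt /=.
  have -> : s%:Z + b%:Z - (- t%:Z + b%:Z) = (s + t)%N%:Z by lia.
  by rewrite dvdzE.
rewrite dvdzE /= /dd.
apply: (big_ind (fun x => `|h| %| x)%N) => //; first by move=> x y; rewrite dvdn_gcd => -> ->.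
move=> s Hs; apply: (big_ind (fun x => `|h| %| x)%N) => //.
  by move=> x y; rewrite dvdn_gcd => -> ->.
by move=> t Ht; apply: Hst.
Qed.

Lemma arith1 (j i m m' b a al be sL : nat) (C : int) :
  (m*b = m'*b + sL*b + al*b + be*b)%N ->
  j%:Z + (m'*b)%N%:Z - (i%:Z + (al*a)%N%:Z - (be*b)%N%:Z + C) =
  -(C + (sL*b)%N%:Z - (j%:Z + (m*b)%N%:Z - i%:Z)) - (al*a + al*b)%N%:Z.
Proof. lia. Qed.

Lemma arith2 (j y m' b a p q' : nat) : (m'*b = p*b + q'*b)%N ->
  j%:Z + (m'*b)%N%:Z - y%:Z = (p*a + p*b)%N%:Z -> (y + p*a = j + q'*b)%N.
Proof. lia. Qed.

Lemma core n (S T : {set 'I_n.+1}) (a b : 'I_n.+1) :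
  a \in S -> b \in T -> (0 < a)%N -> (0 < b)%N ->
  (forall s, s \in S -> s + b <= n.+1)%N -> (forall t, t \in T -> a + t <= n.+1)%N ->
  exists M, forall m, (M <= m)%N -> forall i j : 'I_n.+1,
    bpow (toeplitz S T) m i j = ((dd S T)%:Z %| j%:Z - i%:Z - (m * a)%N%:Z)%Z.
Proof.
move=> Ha Hb Ha0 Hb0 HS HT.
set N := (a + b)%N.
set K := (N * size (gens S T))%N.
exists (K + 2 * n.+1 * K + n.+1)%N => m Hm i j.
apply/idP/idP; first exact: (necess Ha Hb).
move=> Hd.
set R := j%:Z + (m * b)%N%:Z - i%:Z.
have HdR : ((dd S T)%:Z %| R)%Z.
  have -> : R = (j%:Z - i%:Z - (m * a)%N%:Z) + (m * N)%N%:Z by rewrite /R /N mulnDr; lia.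
  apply: rpredD => //; rewrite dvdz_natE; apply: dvdn_mull; exact: dd_dvd.
have HN : (0 < N)%N by rewrite /N; lia.
have [L [HLs HLz HLd]] := table HN (dvdz_trans (hgl_dd S T b N) HdR).
have HLv : all (valid S T) L.
  apply/allP => g /HLs; rewrite mem_cat => /orP [] /mapP [x]; rewrite mem_enum => Hx -> //.
have [al [be [y [Hal Hbe Hy Hw He]]]] :=
  walk_prefix Ha Hb Ha0 Hb0 HS HT HLv (ltn_ord i).
set m' := (m - size L - al - be)%N.
have Hal' : (al <= n.+1 * K)%N by apply: (leq_trans Hal); rewrite leq_mul2l HLz orbT.
have Hbe' : (be <= n.+1 * K)%N by apply: (leq_trans Hbe); rewrite leq_mul2l HLz orbT.
have HLz' : (size L <= K)%N by [].
have Hm' : (n.+1 <= m')%N by rewrite /m'; clearbody K; lia.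
have Em : m = (m' + size L + al + be)%N by rewrite /m'; clearbody K; lia.
have EmB : (m * b = m' * b + size L * b + al * b + be * b)%N by rewrite Em !mulnDl.
set X := j%:Z + (m' * b)%N%:Z - y%:Z.
have HX : (N%:Z %| X)%Z.
  have -> : X = - (Cf (cc b) L - R) - (al * N)%N%:Z.
    rewrite /X He Cf_cc /R /N mulnDr; exact: arith1 EmB.
  by apply: rpredB; rewrite ?rpredN // dvdz_natE dvdn_mull.
have Hm'b : (m' <= m' * b)%N by rewrite leq_pmulr.
have Hm'a : (m' <= m' * a)%N by rewrite leq_pmulr.
have Hjn := ltn_ord j.
have [q Hq] := dvdzP HX.
have Hq0 : 0 <= q.
  have : 0 <= X by rewrite /X; clearbody K m'; lia.
  rewrite Hq pmulr_lge0 //; rewrite ltz_nat.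
have Eq : q = `|q|%N%:Z by rewrite gez0_abs.
set p := `|q|%N.
have EX : X = (p * N)%N%:Z by rewrite Hq Eq PoszM.
have Hpm : (p <= m')%N.
  have : (p * N <= m' * N)%N.
    have : X <= (m' * N)%N%:Z by rewrite /X /N mulnDr; clearbody K m'; lia.
    by rewrite EX lez_nat.
  by rewrite (leq_pmul2r HN).
have [q' Em'] : exists q', m' = (p + q')%N by exists (m' - p)%N; rewrite subnKC.
have Em'b : (m' * b = p * b + q' * b)%N by rewrite Em' mulnDl.
have Hyj : (y + p * a = j + q' * b)%N.
  move: EX; rewrite /X /N mulnDr => H; exact: arith2 Em'b H.
have Hw2 : W S T (p + q') y j.
  apply: (walk_ab (a:=a) (b:=b)) => //; exact: HS.
have := W_cat Hw Hw2.
rewrite /W !inord_val.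
have -> : (size L + al + be + (p + q'))%N = m by rewrite Em Em' addnC !addnA.
done.
Qed.
Local Close Scope ring_scope.

Lemma count_res_ge d q c : 0 < d -> c < d ->
  q.+1 <= count (fun v => v %% d == c.+1 %% d) (iota 1 (q * d + c + 1)).
Proof.
move=> Hd Hc; elim: q => [|q IH].
  rewrite -has_count; apply/hasP; exists c.+1; last by [].
  rewrite mem_iota; lia.
have -> : q.+1 * d + c + 1 = (q * d + c + 1) + d by rewrite mulSn; lia.
rewrite iotaD count_cat.
have : 0 < count (fun v => v %% d == c.+1 %% d) (iota (1 + (q * d + c + 1)) d).
  rewrite -has_count; apply/hasP; exists (q.+1 * d + c + 1).
    rewrite mem_iota mulSn; lia.
  by rewrite -addnA addn1 modnMDl.
lia.
Qed.

Lemma count_res_le1 d r s : count (fun v => v %% d == r) (iota s d) <= 1.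
Proof.
case: (posnP d) => [->|Hd]; first by [].
have Hu : uniq [seq v %% d | v <- iota s d].
  rewrite map_inj_in_uniq ?iota_uniq // => x y; rewrite !mem_iota => Hx Hy /eqP.
  wlog Hxy : x y Hx Hy / x <= y.
    move=> H; case: (leqP x y) => Hxy; first exact: H.
    by move=> E; apply/esym; apply: H => //; [exact: ltnW | rewrite eq_sym].
  rewrite eq_sym (eqn_mod_dvd d Hxy) => Hdv.
  have : y - x < d by lia.
  move=> Hlt; case: (posnP (y - x)) => [H0|Hpos]; first lia.
  have := dvdn_leq Hpos Hdv; lia.
have := count_uniq_mem r Hu; rewrite count_map.
move=> H; rewrite (eq_count (a2 := preim (modn^~ d) (pred1 r))) ?H ?leq_b1 //.
Qed.

Lemma sumn_cs_gen d (s : seq nat) :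
  sumn [seq count (fun v => v %% d == k %% d) s | k <- iota 1 d] <= size s.
Proof.
elim: s => [|x s IH] /=.
  by elim: (iota 1 d) => //.
have -> : sumn [seq (x %% d == k %% d) + count (fun v => v %% d == k %% d) s | k <- iota 1 d]
  = count (fun k => k %% d == x %% d) (iota 1 d)
    + sumn [seq count (fun v => v %% d == k %% d) s | k <- iota 1 d].
  elim: (iota 1 d) => [|k l IHl] //=; rewrite IHl eq_sym; lia.
have := count_res_le1 d (x %% d) 1; lia.
Qed.

Definition Ablk (ms : seq nat) k := sumn (take k ms).

Lemma Ablk_mono ms k k' : k <= k' -> Ablk ms k <= Ablk ms k'.
Proof.
move=> H; rewrite /Ablk -(subnKC H) takeD sumn_cat; exact: leq_addr.
Qed.

Lemma AblkS ms k : k < size ms -> Ablk ms k.+1 = Ablk ms k + nth 0 ms k.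
Proof. by move=> H; rewrite /Ablk (take_nth 0 H) sumn_rcons. Qed.

Lemma cs_size N d : size (class_sizes N d) = d.
Proof. by rewrite size_map size_iota. Qed.

Lemma cs_nth N d k : k < d ->
  nth 0 (class_sizes N d) k = count (fun v => v %% d == k.+1 %% d) (iota 1 N).
Proof. by move=> H; rewrite (nth_map 0) ?size_iota // nth_iota // add1n. Qed.

Lemma cs_big N d u : 0 < d -> u < N -> u %/ d < nth 0 (class_sizes N d) (u %% d).
Proof.
move=> Hd Hu; rewrite cs_nth ?ltn_pmod //.
have -> : N = (u %/ d * d + u %% d + 1) + (N - u.+1).
  have := divn_eq u d; lia.
rewrite iotaD count_cat.
apply: (leq_trans (count_res_ge (u %/ d) Hd (ltn_pmod u Hd))); exact: leq_addr.
Qed.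

Lemma cs_sum N d : Ablk (class_sizes N d) d <= N.
Proof.
rewrite /Ablk take_oversize ?cs_size //.
have := sumn_cs_gen d (iota 1 N); rewrite size_iota.
by [].
Qed.

Definition tau N d (u : nat) := Ablk (class_sizes N d) (u %% d) + u %/ d.

Lemma tau_lt N d u : 0 < d -> u < N -> tau N d u < N.
Proof.
move=> Hd Hu; apply: (leq_trans _ (cs_sum N d)).
have Hk : u %% d < size (class_sizes N d) by rewrite cs_size ltn_pmod.
apply: (@leq_trans (Ablk (class_sizes N d) (u %% d).+1)); last first.
  by apply: Ablk_mono; rewrite ltn_pmod.
by rewrite AblkS // /tau ltn_add2l cs_big.
Qed.

Lemma blk_tau N d u k : 0 < d -> u < N -> k < d ->
  (Ablk (class_sizes N d) k <= tau N d u < Ablk (class_sizes N d) k + nth 0 (class_sizes N d) k)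
  = (k == u %% d).
Proof.
move=> Hd Hu Hk.
have Hud : u %% d < d by rewrite ltn_pmod.
case: (ltngtP k (u %% d)) => H.
- apply/negbTE; rewrite negb_and -!ltnNge; apply/orP; right.
  rewrite -AblkS ?cs_size //; apply: (leq_trans (Ablk_mono _ H)); exact: leq_addr.
- apply/negbTE; rewrite negb_and -!ltnNge; apply/orP; left.
  apply: (leq_trans _ (Ablk_mono _ H)).
  by rewrite AblkS ?cs_size // /tau ltn_add2l cs_big.
- subst k; rewrite /tau leq_addr /= ltn_add2l cs_big // ?eqxx.
Qed.

Lemma blk_tau' N d u k : 0 < d -> u < N -> k < d ->
  (sumn (take k (class_sizes N d)) <= tau N d u < sumn (take k (class_sizes N d)) + nth 0 (class_sizes N d) k)
  = (k == u %% d).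
Proof. exact: blk_tau. Qed.

Lemma bd_tau n d u v : 0 < d -> u < n.+1 -> v < n.+1 ->
  blockdiag_ones n.+1 (class_sizes n.+1 d) (inord (tau n.+1 d u)) (inord (tau n.+1 d v))
  = (u %% d == v %% d).
Proof.
move=> Hd Hu Hv; rewrite mxE /= !inordK ?tau_lt // cs_size.
apply/hasP/eqP => [[k]|E].
  rewrite mem_iota add0n => /andP [_ Hk] /andP [H1 H2].
  have := blk_tau' Hd Hu Hk; rewrite H1 => /esym /eqP <-.
  have := blk_tau' Hd Hv Hk; by rewrite H2 => /esym /eqP <-.
exists (u %% d); first by rewrite mem_iota add0n ltn_pmod.
have H1 := blk_tau' Hd Hu (ltn_pmod u Hd); rewrite eqxx in H1.
have H2 := blk_tau' Hd Hv (ltn_pmod u Hd); rewrite E eqxx -E in H2.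
by rewrite H1 H2.
Qed.

Lemma perm_block n d : 0 < d ->
  exists s : 'S_n.+1, forall i j : 'I_n.+1,
    blockdiag_ones n.+1 (class_sizes n.+1 d) i j = (s i %% d == s j %% d).
Proof.
move=> Hd.
pose t (u : 'I_n.+1) : 'I_n.+1 := inord (tau n.+1 d u).
have tinj : injective t.
  move=> u v /(congr1 (@nat_of_ord _)); rewrite /t !inordK ?tau_lt // => E.
  have Huv : u %% d = v %% d.
    apply/eqP; rewrite -(blk_tau (N:=n.+1)) ?ltn_pmod //.
    by rewrite -E blk_tau ?ltn_pmod.
  apply: ord_inj; rewrite (divn_eq u d) (divn_eq v d) Huv.
  by move: E; rewrite /tau Huv => /addnI ->.
exists (perm tinj)^-1%g => i j.
rewrite -{1}(permKV (perm tinj) i) -{1}(permKV (perm tinj) j) !permE.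
by rewrite bd_tau.
Qed.
Local Close Scope ring_scope.
Import GRing.Theory Num.Theory.

Lemma bigmin_le n (S : {set 'I_n}) (s : 'I_n) :
  s \in S -> \big[minn/n]_(s in S) val s <= val s.
Proof.
move=> Hs; rewrite -minEnat.
have := @Order.TotalTheory.bigmin_le_cond _ nat _ n s (fun i => i \in S) (fun i => val i) Hs.
by rewrite leEnat.
Qed.

Lemma bigmin_mem n (S : {set 'I_n}) : S != set0 ->
  exists2 a : 'I_n, a \in S & val a = \big[minn/n]_(s in S) val s.
Proof.
case/set0Pn => s0 Hs0.
have : (\big[minn/n]_(s in S) val s == n) || [exists s in S, val s == \big[minn/n]_(s in S) val s].
  apply: (big_ind (fun x => (x == n) || [exists s in S, val s == x])).
  - by rewrite eqxx.
  - by move=> x y Hx Hy; case: (leqP x y).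
  - by move=> s Hs; apply/orP; right; apply/existsP; exists s; rewrite Hs eqxx.
case/orP => [/eqP E|/existsP [s /andP [Hs /eqP Es]]]; last by exists s.
by have := bigmin_le Hs0; rewrite E leqNgt ltn_ord.
Qed.

Lemma trT n (S T : {set 'I_n}) : ((toeplitz S T)^T)%R = toeplitz T S.
Proof. by apply/matrixP => i j; rewrite !mxE orbC. Qed.

Local Open Scope ring_scope.

Lemma dvdz_modE (d u v : nat) : ((d%:Z %| v%:Z - u%:Z)%Z) = (u %% d == v %% d)%N.
Proof. by rewrite -eqz_mod_dvd /= !modz_nat eqz_nat eq_sym. Qed.

Lemma bmul_perm n (s : 'S_n) (X : 'M[bool]_n) i j :
  bmul (bperm_mx s) (bmul X ((bperm_mx s)^T)%R) i j = X (s i) (s j).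
Proof.
rewrite /bmul !mxE; apply/existsP/idP => [[k]|H].
  rewrite !mxE => /andP [/eqP <-] /existsP [l]; rewrite !mxE => /andP [H1 /eqP E]; by rewrite E.
exists (s i); rewrite !mxE eqxx /=; apply/existsP; exists (s j); by rewrite !mxE H eqxx.
Qed.

Lemma comb1 (d i j w m a b : nat) :
  (d%:Z %| w%:Z - i%:Z - (m * a)%N%:Z)%Z -> (d%:Z %| j%:Z - w%:Z - (m * b)%N%:Z)%Z ->
  (d %| a + b)%N -> (d%:Z %| j%:Z - i%:Z)%Z.
Proof.
move=> H1 H2 H3.
have -> : (j%:Z - i%:Z = (w%:Z - i%:Z - (m * a)%N%:Z) + (j%:Z - w%:Z - (m * b)%N%:Z)
   + (m * (a + b))%N%:Z)%R by rewrite mulnDr; lia.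
apply: rpredD; [exact: rpredD | by rewrite dvdz_natE dvdn_mull].
Qed.

Lemma comb2 (d i j m a b : nat) : (0 < d)%N -> (d%:Z %| j%:Z - i%:Z)%Z -> (d %| a + b)%N ->
  (d%:Z %| ((i + m * a) %% d)%N%:Z - i%:Z - (m * a)%N%:Z)%Z &&
  (d%:Z %| j%:Z - ((i + m * a) %% d)%N%:Z - (m * b)%N%:Z)%Z.
Proof.
move=> Hd H1 H3.
have E := divn_eq (i + m * a) d.
have H4 : (d%:Z %| ((i + m * a) %% d)%N%:Z - i%:Z - (m * a)%N%:Z)%Z.
  have -> : (((i + m * a) %% d)%N%:Z - i%:Z - (m * a)%N%:Z = - ((i + m * a) %/ d * d)%N%:Z)%R
    by lia.
  by rewrite rpredN dvdz_natE dvdn_mull.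
rewrite H4 /=.
have -> : (j%:Z - ((i + m * a) %% d)%N%:Z - (m * b)%N%:Z =
   (j%:Z - i%:Z) - (((i + m * a) %% d)%N%:Z - i%:Z - (m * a)%N%:Z) - (m * (a + b))%N%:Z)%R
  by rewrite mulnDr; lia.
apply: rpredB; [exact: rpredB | by rewrite dvdz_natE dvdn_mull].
Qed.
Local Close Scope ring_scope.

Theorem corollary2p4 (n : nat) (S T : {set 'I_n}) :
  2 <= n ->
  S != set0 -> T != set0 ->
  (forall s, s \in S -> 0 < val s) -> (forall t, t \in T -> 0 < val t) ->
  (\max_(s in S) val s) + \big[minn/n]_(t in T) val t <= n ->
  \big[minn/n]_(s in S) val s + (\max_(t in T) val t) <= n ->
  let A := toeplitz S T in
  let d := \big[gcdn/0]_(s in S) \big[gcdn/0]_(t in T) (val s + val t) in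
  let d' := gcdn d (\big[minn/n]_(s in S) val s) in
  [/\ is_matrix_period A (d %/ d'),
      is_competition_period A 1 &
      exists P : 'S_n, exists M, forall m, M <= m ->
        bmul (bperm_mx P) (bmul (compm A m) (bperm_mx P)^T)
        = blockdiag_ones n (class_sizes n d)].
Proof.
case: n S T => [|n] S T; first by [].
move=> Hn HS0 HT0 HSp HTp Hm1 Hm2 A d d'.
have [a Ha Ea] := bigmin_mem HS0.
have [b Hb Eb] := bigmin_mem HT0.
have HSb : forall s, s \in S -> s + b <= n.+1.
  move=> s Hs; rewrite Eb; apply: leq_trans Hm1; rewrite leq_add2r.
  exact: (leq_bigmax_cond (F := fun s : 'I_n.+1 => val s)).
have HTa : forall t, t \in T -> a + t <= n.+1.
  move=> t Ht; rewrite Ea; apply: leq_trans Hm2; rewrite leq_add2l.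
  exact: (leq_bigmax_cond (F := fun s : 'I_n.+1 => val s)).
have HSb' : forall s, s \in S -> b + s <= n.+1 by move=> s Hs; rewrite addnC HSb.
have HTa' : forall t, t \in T -> t + a <= n.+1 by move=> t Ht; rewrite addnC HTa.
have Ha0 := HSp a Ha.
have Hb0 := HTp b Hb.
have [M1 C1] := core Ha Hb Ha0 Hb0 HSb HTa.
have [M2 C2] := core Hb Ha Hb0 Ha0 HTa' HSb'.
have Ed : d = dd S T by [].
have EdT : dd T S = d by rewrite dd_sym.
rewrite EdT in C2; rewrite -Ed in C1.
have Ed' : d' = gcdn d a by rewrite /d' Ea.
have Hdab : d %| a + b by rewrite Ed dd_dvd.
have Hd0 : 0 < d by apply: (dvdn_gt0 _ Hdab); rewrite addn_gt0 Ha0.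
have Hdn : d <= n.+1 by apply: (leq_trans (dvdn_leq _ Hdab)); [rewrite addn_gt0 Ha0 | exact: HSb].
pose L : 'M[bool]_n.+1 := (\matrix_(i, j) (d%:Z %| (j%:Z - i%:Z))%Z)%R.
have HC : forall m, M1 + M2 <= m -> compm A m = L.
  move=> m Hm; apply/matrixP => i j; rewrite /compm /bmul !mxE /A trT.
  have Hm1' : M1 <= m by lia.
  have Hm2' : M2 <= m by lia.
  apply/existsP/idP => [[w /andP [H1 H2]]|H].
    rewrite C1 // in H1; rewrite C2 // in H2.
    exact: comb1 H1 H2 Hdab.
  have Hw : (i + m * a) %% d < n.+1 by apply: leq_trans Hdn; rewrite ltn_pmod.
  exists (inord ((i + m * a) %% d)).
  rewrite C1 // C2 // inordK //; exact: comb2.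
split.
-
  have Hd'a : d' %| a by rewrite Ed' dvdn_gcdr.
  have Hd'd : d' %| d by rewrite Ed' dvdn_gcdl.
  have Hd'0 : 0 < d' by rewrite Ed' gcdn_gt0 Hd0.
  have Hpa : d %| d %/ d' * a.
    by rewrite (divn_mulAC _ Hd'd) -(muln_divA _ Hd'a) dvdn_mulr.
  split; first by rewrite divn_gt0 // dvdn_leq.
  split.
    exists M1 => m Hm; apply/matrixP => i j.
    rewrite C1 // C1; last by apply: leq_trans Hm (leq_addr _ _).
    have Hpz : (d%:Z %| (d %/ d' * a)%N%:Z)%Z by rewrite dvdz_natE.
    by rewrite mulnDl PoszD opprD addrA (rpredBr _ Hpz).
  move=> p' Hp' [M' HM'].
  set m := (M1 + M') * d.
  have Hm1' : M1 <= m by rewrite /m; have : 0 < d by []; nia.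
  have Hm' : M' <= m by rewrite /m; have : 0 < d by []; nia.
  have := congr1 (fun X : 'M[bool]_n.+1 => X ord0 ord0) (HM' m Hm').
  rewrite /= C1 // C1; last by apply: leq_trans Hm1' (leq_addr _ _).
  have Hma : d %| m * a by rewrite /m mulnAC dvdn_mull.
  rewrite /= !subrr !sub0r !rpredN !dvdz_natE Hma => /esym.
  rewrite mulnDl dvdn_addr // => Hp'a.
  have Ed1 : d = d' * (d %/ d') by rewrite mulnC divnK.
  have Ea1 : (a : nat) = d' * (a %/ d') by rewrite mulnC divnK.
  have Hcop : coprime (d %/ d') (a %/ d').
    rewrite /coprime -(eqn_pmul2l Hd'0) muln1 muln_gcdr -Ed1 -Ea1.
    by rewrite Ed'.
  move: Hp'a; rewrite {1}Ed1 {1}Ea1 mulnCA dvdn_pmul2l // Gauss_dvdl //.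
  by move=> H; apply: dvdn_leq.
- set M0 := (M1 + M2).+1.
  pose Pq q := (0 < q) && [forall k : 'I_M0.+1, (q <= k) ==> (compm A k == L)].
  have PqE : forall q, Pq q -> forall k, q <= k -> compm A k = L.
    move=> q /andP [_ /forallP H] k Hk; case: (leqP k M0) => Hk0.
      by have := H (inord k); rewrite inordK ?ltnS // Hk /= => /eqP.
    apply: HC; rewrite /M0 in Hk0; lia.
  have CIP : forall q, comp_index_prop A q -> forall k, q <= k -> compm A k = L.
    move=> q [r Hr Hq] k Hk.
    have Ht : forall t, compm A k = compm A (k + t * r).
      elim=> [|t IH]; first by rewrite mul0n addn0.
      rewrite IH; have := Hq (k - q + t * r).
      have -> : q + (k - q + t * r) = k + t * r by lia.
      by have -> : q + r + (k - q + t * r) = k + t.+1 * r by rewrite mulSn; lia.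
    rewrite (Ht (M1 + M2)); apply: HC.
    have : M1 + M2 <= (M1 + M2) * r by rewrite leq_pmulr.
    lia.
  have exP : exists q, Pq q.
    exists M0; rewrite /Pq; apply/andP; split => //.
    apply/forallP => k; apply/implyP => Hk; apply/eqP; apply: HC.
    have := ltn_ord k; rewrite /M0 in Hk *; lia.
  have [q Hq Hmin] := ex_minnP exP.
  exists q; split.
    split; first by case/andP: Hq.
    split.
      exists 1 => // i; rewrite (PqE q Hq) ?leq_addr // (PqE q Hq) //; lia.
    move=> q' Hq' Hcip; apply: Hmin; rewrite /Pq Hq' /=.
    apply/forallP => k; apply/implyP => Hk; by rewrite (CIP q' Hcip k Hk).
  split => //; rewrite !(PqE q Hq) //; lia.
- have [sg Hsg] := perm_block n Hd0.
  exists sg, (M1 + M2) => m Hm; rewrite HC //; apply/matrixP => i j.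
  by rewrite bmul_perm Hsg mxE dvdz_modE.
Qed.
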